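(* Let $\vec G$ be a finite loopless directed multigraph and $\mathfrak f$ a fraternal completion of $\vec G$ of depth $a$. Then for every arc $e$ of $\vec G$, $$\bigl|\{f\in E_{\mathfrak f}: f\succeq e\}\bigr|\le C(\mathfrak f),\qquad\text{where } C(\mathfrak f)=\sum_{\substack{(i_1,\dots,i_k)\\ k\ge 0,\ i_j\ge 1,\ \sum_j i_j< a}}\ \prod_{j=1}^k \Delta^-(\vec H_{i_j})$$ (the sum ranges over all finite sequences of positive integers with sum less than $a$, including the empty sequence, whose product is $1$).
   Context: Let $\vec G$ be a finite loopless directed multigraph and $a$ a positive integer. A fraternal completion of $\vec G$ of depth $a$ is a triple $\mathfrak f=((E_1,\dots,E_a),w,\kappa)$ such that: $E_1=E(\vec G)$; for $2\le i\le a$, $E_i$ is the arc set of a directed multigraph with vertex set $V(\vec G)$; the sets $E_1,\dots,E_a$ are pairwise disjoint (distinct arcs may have the same head and tail); writing $E_{\mathfrak f}=\bigcup_{1\le i\le a}E_i$, the weight $w(e)$ of $e\in E_{\mathfrak f}$ is the $i$ with $e\in E_i$; $\kappa$ maps each $e\in\bigcup_{1<i\le a}E_i$ to a pair $(f,g)\in E_{\mathfrak f}^2$ with ${\rm tail}(f)\ne{\rm tail}(g)$, $w(e)=w(f)+w(g)$, ${\rm tail}(e)={\rm tail}(f)$, ${\rm head}(e)={\rm tail}(g)$, ${\rm head}(f)={\rm head}(g)$; and conversely, for all $i,j$ with $i+j\le a$ and all $f\in E_i$, $g\in E_j$ with ${\rm tail}(f)\ne{\rm tail}(g)$ and ${\rm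 head}(f)={\rm head}(g)$, there is a unique $e\in E_{i+j}$ with $\kappa(e)\in\{(f,g),(g,f)\}$. Let $\prec$ be the partial order on $E_{\mathfrak f}$ obtained as the transitive closure of the relations $f\prec e$ and $g\prec e$ whenever $\kappa(e)=(f,g)$; $f\preceq e$ means $f\prec e$ or $f=e$. $\vec H_i$ denotes the directed multigraph $(V(\vec G),E_i)$ and $\Delta^-(\vec H_i)$ its maximum in-degree. *)

(* Defs.v *)
From mathcomp Require Import all_boot.
Set Implicit Arguments. Unset Strict Implicit. Unset Printing Implicit Defensive.

Definition loopless (V A : finType) (tlG hdG : A -> V) : Prop :=
  forall e : A, tlG e != hdG e.

(* A fraternal completion of depth a of G = (V, A, tlG, hdG) is encoded as:
   - a finType F of all arcs of E_f (the disjoint union E_1 u ... u E_a),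
   - tail/head maps tl hd : F -> V,
   - the weight w : F -> nat (w f = i iff f \in E_i),
   - kappa : F -> F * F (only meaningful on arcs of weight > 1),
   - emb : A -> F, a bijection of E(G) onto E_1 = {f | w f = 1} preserving
     tails and heads (this identifies E_1 with E(G)). *)
Definition is_fraternal_completion (V A F : finType) (tlG hdG : A -> V)
  (a : nat) (tl hd : F -> V) (w : F -> nat) (kappa : F -> F * F) (emb : A -> F)
  : Prop :=
      (forall f : F, 1 <= w f <= a) /\
      injective emb /\
      (forall f : F, w f = 1 <-> exists e : A, emb e = f) /\
      (forall e : A, tl (emb e) = tlG e /\ hd (emb e) = hdG e) /\
      (forall e : F, 1 < w e ->
         let f := (kappa e).1 in let g := (kappa e).2 in
         (tl f != tl g) /\ (w e = w f + w g) /\ (tl e = tl f) /\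
         (hd e = tl g) /\ (hd f = hd g)) /\
      (forall f g : F, w f + w g <= a -> tl f != tl g -> hd f = hd g ->
         exists! e : F, 1 < w e /\ (kappa e = (f, g) \/ kappa e = (g, f))).

Definition kchild (F : finType) (w : F -> nat) (kappa : F -> F * F) : rel F :=
  fun f e => (1 < w e) && ((f == (kappa e).1) || (f == (kappa e).2)).

(* f \preceq e  iff  connect (kchild w kappa) f e  (reflexive-transitive closure). *)

Definition maxindeg (V F : finType) (hd : F -> V) (w : F -> nat) (i : nat) : nat :=
  \max_(v : V) #|[set f : F | (w f == i) && (hd f == v)]|.

(* Such a sequence has length k < a and
   entries < a, so it is enumerated exactly once as a k-tuple of 'I_a, k < a. *)
Definition Cf (V F : finType) (hd : F -> V) (w : F -> nat) (a : nat) : nat :=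
  \sum_(k < a)
    \sum_(t : k.-tuple 'I_a |
            all (fun i : 'I_a => 0 < val i) t && (sumn (map val t) < a))
      \prod_(i <- t) maxindeg hd w (val i).

(* Main.v *)
Require Import Defs.
From mathcomp Require Import all_boot zify.
Set Implicit Arguments. Unset Strict Implicit. Unset Printing Implicit Defensive.

Fixpoint D (a : nat) (M : nat -> nat) (K m : nat) : nat :=
  if K is K'.+1 then 1 + \sum_(i < a | 0 < i <= m) M i * D a M K' (m - i) else 0.

Definition Pt (a k : nat) (m : nat) (t : k.-tuple 'I_a) :=
  all (fun i : 'I_a => 0 < val i) t && (sumn (map val t) <= m).
Definition T (a : nat) (M : nat -> nat) (k m : nat) := \sum_(t : k.-tuple 'I_a | Pt m t) \prod_(i <- t) M (val i).
Definition G (a : nat) (M : nat -> nat) (K m : nat) := \sum_(k < K) T a M k m.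

Lemma T_cons (a : nat) (M : nat -> nat) (k m : nat) :
  \sum_(i < a | 0 < i <= m) M i * T a M k (m - i) = T a M k.+1 m.
Proof.
rewrite [RHS](reindex (fun p : 'I_a * k.-tuple 'I_a => [tuple of p.1 :: p.2])) /=; last first.
  exists (fun t : k.+1.-tuple 'I_a => (thead t, [tuple of behead t])).
  - by case=> i t _ /=; congr pair; apply: val_inj.
  - by move=> t _; case/tupleP: t => i t; apply: val_inj.
rewrite /T; under eq_bigr do rewrite big_distrr /=.
rewrite pair_big_dep /=; apply: eq_big.
  case=> i t /=; rewrite /Pt /=.
  case: (0 < i); rewrite ?andbF //=.
  case: (all _ _); rewrite ?andbF //=.
  case: (leqP i m) => him /=; first by rewrite leq_subRL.
  apply/esym/negbTE; rewrite -ltnNge; apply: leq_trans him _; exact: leq_addr.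
by case=> i t _; rewrite big_cons.
Qed.

Lemma D_le_G (a : nat) (M : nat -> nat) (K m : nat) : D a M K m <= G a M K m.
Proof.
elim: K m => [|K IH] m; first by rewrite /G big_ord0.
change (D a M K.+1 m) with (1 + \sum_(i < a | 0 < i <= m) M i * D a M K (m - i)).
rewrite /G big_ord_recl.
apply: leq_add.
  rewrite /T (bigD1 [tuple]) //.
  by rewrite big_nil leq_addr.
apply: (@leq_trans (\sum_(i < a | 0 < i <= m) M i * G a M K (m - i))).
  by apply: leq_sum => i _; rewrite leq_mul2l IH orbT.
rewrite /G; under eq_bigr => i _ do rewrite big_distrr.
rewrite exchange_big; apply: leq_sum => k _.
by rewrite -T_cons.
Qed.

Lemma card_bigcup_le (I T : finType) (P : pred I) (B : I -> {set T}) :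
  #|\bigcup_(i | P i) B i| <= \sum_(i | P i) #|B i|.
Proof.
elim/big_rec2: _ => [|i X s _ H]; first by rewrite cards0.
by rewrite (leq_trans (leq_card_setU _ _)) // leq_add2l.
Qed.

Lemma count_bound (V A F : finType) (tlG hdG : A -> V) (n : nat)
  (tl hd : F -> V) (w : F -> nat) (kappa : F -> F * F) (emb : A -> F) :
  is_fraternal_completion tlG hdG n.+1 tl hd w kappa emb ->
  forall K (x : F), n.+1 - w x < K ->
  #|[set f | connect (kchild w kappa) x f]| <= D n.+1 (maxindeg hd w) K (n.+1 - w x).
Proof.
move=> [Hw [_ [_ [_ [Hk Hu]]]]].
set r := kchild w kappa.
elim=> [//|K IH] x HK.
set m := n.+1 - w x.
set Y := [set y | r x y].
pose p y := if x == (kappa y).1 then (kappa y).2 else (kappa y).1.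
have HY : forall y, y \in Y -> [/\ 1 < w y, w y = w x + w (p y), hd (p y) = hd x,
     tl x != tl (p y) & (kappa y = (x, p y) \/ kappa y = (p y, x))].
  move=> y; rewrite inE /r /kchild => /andP [wy hx].
  move: (Hk y wy) hx; rewrite /p; case: (kappa y) => f g /= [tfg [wfg [_ [_ hfg]]]].
  case: (eqVneq x f) => [->|nxf] /=; first by move=> _; split => //; left.
  move=> /eqP ->; split => //; [by rewrite addnC | by rewrite eq_sym | by right].
have pinj : {in Y &, injective p}.
  move=> y1 y2 /HY [g1 w1 h1 t1 k1] /HY [g2 w2 h2 t2 k2] e.
  have wle : w x + w (p y1) <= n.+1 by rewrite -w1; case/andP: (Hw y1).
  have [e0 [_ U]] := Hu x (p y1) wle t1 (esym h1).
  rewrite -(U y1 (conj g1 k1)); apply: U; split => //; by rewrite e.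
have sub : [set f | connect r x f] \subset x |: \bigcup_(y in Y) [set f | connect r y f].
  apply/subsetP => f; rewrite inE => /connectP [q].
  case: q => [_ ->|y q] /=; first by rewrite setU11.
  move=> /andP [rxy pq] ->; rewrite setU1r //; apply/bigcupP; exists y; first by rewrite inE.
  by rewrite inE; apply/connectP; exists q.
have c1 : #|[set f | connect r x f]| <= 1 + \sum_(y in Y) #|[set f | connect r y f]|.
  apply: leq_trans (subset_leq_card sub) _; rewrite cardsU1.
  apply: leq_add; first by case: (_ \notin _).
  exact: card_bigcup_le.
change (D n.+1 (maxindeg hd w) K.+1 m) with
  (1 + \sum_(i < n.+1 | 0 < i <= m) maxindeg hd w i * D n.+1 (maxindeg hd w) K (m - i)).
apply: leq_trans c1 _; rewrite leq_add2l.
apply: (@leq_trans (\sum_(y in Y) D n.+1 (maxindeg hd w) K (m - w (p y)))).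
  apply: leq_sum => y yY; have [g1 w1 _ _ _] := HY y yY.
  have wyn : w y <= n.+1 by case/andP: (Hw y).
  have wp : 0 < w (p y) by case/andP: (Hw (p y)).
  have -> : m - w (p y) = n.+1 - w y by rewrite w1 subnDA.
  apply: IH; rewrite /m in HK; lia.
have pb : forall y, y \in Y -> 0 < w (p y) <= m.
  move=> y yY; have [g1 w1 _ _ _] := HY y yY.
  have wyn : w y <= n.+1 by case/andP: (Hw y).
  have wp : 0 < w (p y) by case/andP: (Hw (p y)).
  rewrite /m; apply/andP; split => //; lia.
have pn : forall y, y \in Y -> w (p y) < n.+1.
  move=> y yY; have := pb y yY; have : 0 < w x by case/andP: (Hw x).
  rewrite /m; lia.
rewrite (partition_big (fun y => inord (w (p y)) : 'I_n.+1) (fun i : 'I_n.+1 => 0 < i <= m)); last first.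
  by move=> y yY; rewrite inordK ?pb ?pn.
apply: leq_sum => i /andP [i0 im].
rewrite (eq_bigr (fun _ => D n.+1 (maxindeg hd w) K (m - i))); last first.
  by move=> y /andP [yY /eqP <-]; rewrite inordK ?pn.
rewrite (eq_bigl (fun y => y \in [set y in Y | inord (w (p y)) == i])); last first.
  by move=> y; rewrite !inE; apply/idP/idP.
rewrite big_const iter_addn_0 mulnC leq_mul2r; apply/orP; right.
set S := [set y in Y | _].
have pinjS : {in S &, injective p}.
  by move=> y1 y2 /setIdP [y1Y _] /setIdP [y2Y _]; apply: pinj.
rewrite -(card_in_imset pinjS).
apply: (@leq_trans #|[set f | (w f == i) && (hd f == hd x)]|).
  apply: subset_leq_card; apply/subsetP => g /imsetP [y /setIdP [yY /eqP ei] ->]; rewrite inE.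
  have [_ _ h1 _ _] := HY y yY.
  rewrite h1 eqxx andbT -ei inordK ?pn //.
rewrite /maxindeg; exact: (@leq_bigmax V (fun v : V => #|[set f | (w f == i) && (hd f == v)]|) (hd x)).
Qed.

Theorem mainTheorem10 (V A F : finType) (tlG hdG : A -> V) (a : nat)
  (tl hd : F -> V) (w : F -> nat) (kappa : F -> F * F) (emb : A -> F) :
  0 < a ->
  loopless tlG hdG ->
  is_fraternal_completion tlG hdG a tl hd w kappa emb ->
  forall e : A,
    #|[set f : F | connect (kchild w kappa) (emb e) f]| <= Cf hd w a.
Proof.
case: a => [//|n] _ _ H e.
have w1 : w (emb e) = 1.
  by case: H => [_ [_ [H1 _]]]; apply/H1; exists e.
have hb := count_bound H (K:=n.+1) (x:=emb e); rewrite w1 subn1 in hb.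
apply: leq_trans (hb (ltnSn n)) _.
apply: leq_trans (D_le_G _ _ _ _) _.
rewrite /G /Cf /T /Pt; apply: eq_leq; apply: eq_bigr => k _.
by apply: eq_bigl => t; rewrite ltnS.
Qed.
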